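(* Let $L:\mathcal{B}\to\mathcal{A}$ be left adjoint to $R:\mathcal{A}\to\mathcal{B}$ with unit $\eta$ and counit $\epsilon$, and let $R_1:\mathcal{A}\to\mathcal{B}_1$ be the comparison functor. 1) If $R$ is separable, then $R_1$ is full and faithful. 2) Suppose $R_1$ has a left adjoint $L_1$. If $(L,\epsilon L)$ is relatively projective as a right module functor on $(RL,R\epsilon L,\eta)$, then $L_1$ is full and faithful. 3) Suppose $R_1$ has a left adjoint $L_1$. If $R$ is separable, then $R$ is monadic.
   Context: $\mathcal{B}_1$ is the Eilenberg–Moore category of the monad $(RL,R\epsilon L,\eta)$ and $R_1Y=(RY,R\epsilon Y)$, $R_1f=Rf$. $R$ is monadic if $R_1$ is an equivalence. For a right adjoint $R$, $R$ is separable iff there is a natural transformation $\sigma:\mathrm{Id}_{\mathcal{A}}\to LR$ with $\epsilon\circ\sigma=\mathrm{Id}$. Given a monad $(Q,m,u)$ on $\mathcal{B}$, a right module functor is a pair $(W,\mu)$ with $W:\mathcal{B}\to\mathcal{A}$ and $\mu:WQ\to W$ natural, $\mu\circ\mu Q=\mu\circ Wm$, $\mu\circ Wu=\mathrm{Id}_W$; it is relatively projective if there is a natural $\gamma:W\to WQ$ with $\mu\circ\gamma=\mathrm{Id}_W$ and $Wm\circ\gamma Q=\gamma\circ\mu$. $(L,\epsilon L)$ is a right module functor on $(RL,R\epsilon L,\eta)$. *)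

(* Defs.v *)
From Stdlib Require Import ProofIrrelevance.

Set Implicit Arguments.

Record Category := {
  Ob :> Type;
  Hom : Ob -> Ob -> Type;
  idm : forall a, Hom a a;
  comp : forall x y z, Hom y z -> Hom x y -> Hom x z;
  comp_id_l : forall a b (f : Hom a b), comp (idm b) f = f;
  comp_id_r : forall a b (f : Hom a b), comp f (idm a) = f;
  comp_assoc : forall a b c d (f : Hom c d) (g : Hom b c) (h : Hom a b),
      comp f (comp g h) = comp (comp f g) h
}.
Arguments Hom {c} _ _ : rename.
Arguments idm {c} a : rename.
Arguments comp {c x y z} _ _ : rename.
Notation "g ∘ f" := (comp g f) (at level 40, left associativity).

Record Functor (C D : Category) := {
  fobj :> C -> D;
  fmap : forall a b, @Hom C a b -> @Hom D (fobj a) (fobj b);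
  fmap_id : forall a, fmap a a (idm a) = idm (fobj a);
  fmap_comp : forall a b c (g : @Hom C b c) (f : @Hom C a b),
      fmap a c (g ∘ f) = fmap b c g ∘ fmap a b f
}.
Arguments fmap {C D} F {a b} _ : rename.

Definition Fcomp (C D E : Category) (G : Functor D E) (F : Functor C D)
  : Functor C E.
Proof.
  refine {| fobj := fun X => G (F X);
            fmap := fun a b f => fmap G (fmap F f) |}.
  - intros a. rewrite !fmap_id. reflexivity.
  - intros a b c g f. rewrite !fmap_comp. reflexivity.
Defined.

Record is_adjunction (A B : Category) (L : Functor B A) (R : Functor A B)
    (eta : forall Y : B, @Hom B Y (R (L Y)))
    (eps : forall X : A, @Hom A (L (R X)) X) : Prop := {
  eta_nat : forall Y Y' (f : @Hom B Y Y'),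
      fmap R (fmap L f) ∘ eta Y = eta Y' ∘ f;
  eps_nat : forall X X' (g : @Hom A X X'),
      g ∘ eps X = eps X' ∘ fmap L (fmap R g);
  tri_L : forall Y, eps (L Y) ∘ fmap L (eta Y) = idm (L Y);
  tri_R : forall X, fmap R (eps X) ∘ eta (R X) = idm (R X)
}.

Definition fully_faithful (C D : Category) (F : Functor C D) : Prop :=
  forall a b : C,
    (forall f g : @Hom C a b, fmap F f = fmap F g -> f = g) /\
    (forall h : @Hom D (F a) (F b), exists f, fmap F f = h).

Definition is_equivalence (C D : Category) (F : Functor C D) : Prop :=
  exists (G : Functor D C)
         (al : forall X : C, @Hom C (G (F X)) X)
         (al' : forall X : C, @Hom C X (G (F X)))
         (be : forall Y : D, @Hom D (F (G Y)) Y)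
         (be' : forall Y : D, @Hom D Y (F (G Y))),
    (forall X X' (f : @Hom C X X'), f ∘ al X = al X' ∘ fmap G (fmap F f)) /\
    (forall X, al X ∘ al' X = idm X /\ al' X ∘ al X = idm (G (F X))) /\
    (forall Y Y' (g : @Hom D Y Y'), g ∘ be Y = be Y' ∘ fmap F (fmap G g)) /\
    (forall Y, be Y ∘ be' Y = idm Y /\ be' Y ∘ be Y = idm (F (G Y))).

Definition separable (A B : Category) (L : Functor B A) (R : Functor A B)
    (eps : forall X : A, @Hom A (L (R X)) X) : Prop :=
  exists sigma : forall X : A, @Hom A X (L (R X)),
    (forall X X' (g : @Hom A X X'), fmap L (fmap R g) ∘ sigma X = sigma X' ∘ g) /\
    (forall X, eps X ∘ sigma X = idm X).

Definition relatively_projective (A B : Category) (Q : Functor B B)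
    (m : forall Y : B, @Hom B (Q (Q Y)) (Q Y))
    (W : Functor B A) (mu : forall Y : B, @Hom A (W (Q Y)) (W Y)) : Prop :=
  exists gamma : forall Y : B, @Hom A (W Y) (W (Q Y)),
    (forall Y Y' (f : @Hom B Y Y'),
        fmap W (fmap Q f) ∘ gamma Y = gamma Y' ∘ fmap W f) /\
    (forall Y, mu Y ∘ gamma Y = idm (W Y)) /\
    (forall Y, fmap W (m Y) ∘ gamma (Q Y) = gamma Y ∘ mu Y).

Section EM.
Variables (A B : Category) (L : Functor B A) (R : Functor A B)
  (eta : forall Y : B, @Hom B Y (R (L Y)))
  (eps : forall X : A, @Hom A (L (R X)) X).

Record EMAlg := {
  carrier : B;
  act : @Hom B (R (L carrier)) carrier;
  act_unit : act ∘ eta carrier = idm carrier;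
  act_assoc : act ∘ fmap R (eps (L carrier)) = act ∘ fmap R (fmap L act)
}.

Definition EMHom (X Y : EMAlg) : Type :=
  { f : @Hom B (carrier X) (carrier Y) |
    f ∘ act X = act Y ∘ fmap R (fmap L f) }.

Lemma EMHom_eq (X Y : EMAlg) (f g : EMHom X Y) :
  proj1_sig f = proj1_sig g -> f = g.
Proof.
  destruct f as [f p], g as [g q]; simpl; intros ->.
  f_equal; apply proof_irrelevance.
Qed.

Definition EMid (X : EMAlg) : EMHom X X.
Proof.
  exists (idm (carrier X)).
  rewrite comp_id_l, !fmap_id, comp_id_r. reflexivity.
Defined.

Definition EMcomp (X Y Z : EMAlg) (g : EMHom Y Z) (f : EMHom X Y) : EMHom X Z.
Proof.
  exists (proj1_sig g ∘ proj1_sig f).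
  destruct g as [g pg], f as [f pf]; simpl.
  rewrite <- comp_assoc, pf, comp_assoc, pg, <- comp_assoc,
    <- (fmap_comp R), <- (fmap_comp L). reflexivity.
Defined.

Definition EMCat : Category.
Proof.
  refine {| Ob := EMAlg; Hom := EMHom; idm := EMid; comp := EMcomp |}.
  - intros; apply EMHom_eq; simpl; apply comp_id_l.
  - intros; apply EMHom_eq; simpl; apply comp_id_r.
  - intros; apply EMHom_eq; simpl; apply comp_assoc.
Defined.

Hypothesis adj : is_adjunction L R eta eps.

Definition R1_obj (X : A) : EMAlg.
Proof.
  refine {| carrier := R X; act := fmap R (eps X) |}.
  - apply (tri_R adj).
  - rewrite <- !fmap_comp. f_equal. apply (eps_nat adj).
Defined.

Definition R1_map (X X' : A) (g : @Hom A X X') : EMHom (R1_obj X) (R1_obj X').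
Proof.
  exists (fmap R g). simpl. rewrite <- !fmap_comp. f_equal. apply (eps_nat adj).
Defined.

Definition R1 : Functor A EMCat.
Proof.
  refine (@Build_Functor A EMCat R1_obj R1_map _ _).
  - intros; apply EMHom_eq; simpl; apply fmap_id.
  - intros; apply EMHom_eq; simpl; apply fmap_comp.
Defined.

End EM.

Definition monadic (A B : Category) (L : Functor B A) (R : Functor A B)
    (eta : forall Y : B, @Hom B Y (R (L Y)))
    (eps : forall X : A, @Hom A (L (R X)) X)
    (adj : is_adjunction L R eta eps) : Prop :=
  is_equivalence (R1 adj).

(* Main.v *)
Require Import Defs.
From Stdlib Require Import ClassicalEpsilon.


Lemma cA {C : Category} {a b c d : C} (f : Hom c d) (g : Hom b c) (h : Hom a b) :
  f ∘ (g ∘ h) = f ∘ g ∘ h.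
Proof. apply comp_assoc. Qed.
Lemma cl {C : Category} {a b : C} (f : Hom a b) : idm b ∘ f = f.
Proof. apply comp_id_l. Qed.
Lemma cr {C : Category} {a b : C} (f : Hom a b) : f ∘ idm a = f.
Proof. apply comp_id_r. Qed.
Lemma fc {C D : Category} (F : Functor C D) {a b c : C} (g : Hom b c) (f : Hom a b) :
  fmap F (g ∘ f) = fmap F g ∘ fmap F f.
Proof. apply fmap_comp. Qed.
Lemma fi {C D : Category} (F : Functor C D) (a : C) : fmap F (idm a) = idm (F a).
Proof. apply fmap_id. Qed.

Definition isoinv {C : Category} {a b : C} (f : Hom a b) (g : Hom b a) : Prop :=
  g ∘ f = idm a /\ f ∘ g = idm b.

Lemma transL {C D : Category} {F : Functor D C} {G : Functor C D} {eta eps}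
  (H : is_adjunction F G eta eps) {W Z} (phi : Hom (F W) Z) :
  phi = eps Z ∘ fmap F (fmap G phi ∘ eta W).
Proof.
  rewrite fc, cA, <- (eps_nat H), <- cA, (tri_L H), cr.
  reflexivity.
Qed.

Lemma ff_counit {C D : Category} {F : Functor D C} {G : Functor C D} {eta eps}
  (H : is_adjunction F G eta eps) : fully_faithful G ->
  forall X, exists e, isoinv (eps X) e.
Proof.
  intros HG X.
  destruct (proj2 (HG X (F (G X))) (eta (G X))) as [e He].
  exists e. split.
  - rewrite (transL H (e ∘ eps X)), (fc G), <- (cA _ (fmap G (eps X))), (tri_R H), cr, He, (tri_L H).
    reflexivity.
  - apply (proj1 (HG X X)). rewrite fc, He, (tri_R H), fi. reflexivity.
Qed.

Lemma unitiso_ff {C D : Category} {F : Functor D C} {G : Functor C D} {eta eps}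
  (H : is_adjunction F G eta eps) :
  (forall Y, exists u, isoinv (eta Y) u) -> fully_faithful F.
Proof.
  intros Hu a b.
  destruct (Hu a) as [ua [ua1 ua2]]. destruct (Hu b) as [ub [ub1 ub2]].
  assert (Hf : forall f : Hom a b, f = ub ∘ (fmap G (fmap F f) ∘ eta a)).
  { intro f. rewrite (eta_nat H), cA, ub1, cl. reflexivity. }
  split.
  - intros f g Hfg. rewrite (Hf f), (Hf g), Hfg. reflexivity.
  - intros h. exists (ub ∘ (fmap G h ∘ eta a)).
    rewrite (transL H (fmap F _)), (eta_nat H), cA, ub2, cl.
    rewrite <- (transL H (h)). reflexivity.
Qed.

Lemma retract_unit {C D : Category} {F : Functor D C} {G : Functor C D} {eta eps}
  (H : is_adjunction F G eta eps) (Y : D) (Z : C) (i : Hom Y (G Z)) (p : Hom (G Z) Y)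
  (pi : p ∘ i = idm Y) (j : Hom (G (F (G Z))) (G Z)) (Hj : isoinv (eta (G Z)) j) :
  exists r, isoinv (eta Y) r.
Proof.
  destruct Hj as [j1 j2].
  exists (p ∘ j ∘ fmap G (fmap F i)). split.
  - rewrite <- !cA, (eta_nat H), (cA j), j1, cl, pi. reflexivity.
  - rewrite !cA, <- (eta_nat H), <- (cA _ (eta _)), j2, cr,
      <- !fc, pi, !fi. reflexivity.
Qed.

Lemma unit_G {C D : Category} {F : Functor D C} {G : Functor C D} {eta eps}
  (H : is_adjunction F G eta eps) (Z : C) (k : Hom Z (F (G Z)))
  (Hk : fmap G k = eta (G Z)) : isoinv (eta (G Z)) (fmap G (eps Z)).
Proof.
  split.
  - apply (tri_R H).
  - assert (E : k ∘ eps Z = idm _).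
    { rewrite (transL H (k ∘ eps Z)), (fc G k), <- (cA _ (fmap G (eps Z))), (tri_R H), cr, Hk, (tri_L H).
      reflexivity. }
    rewrite <- Hk, <- fc, E. apply fi.
Qed.

Lemma inv_nat {C D : Category} {F : Functor D C} {G : Functor C D} {eta eps}
  (H : is_adjunction F G eta eps) (u : forall Y, Hom (G (F Y)) Y)
  (Hu : forall Y, isoinv (eta Y) (u Y)) Y Y' (g : Hom Y Y') :
  g ∘ u Y = u Y' ∘ fmap G (fmap F g).
Proof.
  destruct (Hu Y) as [a1 a2]. destruct (Hu Y') as [b1 b2].
  rewrite <- (cl g) at 1. rewrite <- b1, <- (cA (u Y') (eta Y') g), <- (eta_nat H), cA.
  rewrite <- (cA _ (eta Y)), a2, cr. reflexivity.
Qed.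

Lemma em_k {A B : Category} {L : Functor B A} {R : Functor A B} {eta eps}
  (adj : is_adjunction L R eta eps) (L1 : Functor (EMCat L R eta eps) A) eta1 eps1
  (H1 : is_adjunction L1 (R1 adj) eta1 eps1) (Y : B) :
  exists k : Hom (L Y) (L1 (R1 adj (L Y))), fmap (R1 adj) k = eta1 (R1 adj (L Y)).
Proof.
  destruct (eta1 (R1 adj (L Y))) as [e He]. simpl in He.
  exists (eps (L1 (R1 adj (L Y))) ∘ fmap L (e ∘ eta Y)).
  apply EMHom_eq. simpl.
  rewrite (fc R), (fc L), (fc R (fmap L e)), cA.
  etransitivity. { apply (f_equal (fun z => z ∘ fmap R (fmap L (eta Y)))). symmetry. exact He. }
  rewrite <- cA, <- fc, (tri_L adj), fi, cr. reflexivity.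
Qed.

Lemma em_retract {A B : Category} {L : Functor B A} {R : Functor A B} {eta eps}
  (adj : is_adjunction L R eta eps)
  (gamma : forall Y : B, Hom (L Y) (L (R (L Y))))
  (g1 : forall Y Y' (f : Hom Y Y'), fmap L (fmap R (fmap L f)) ∘ gamma Y = gamma Y' ∘ fmap L f)
  (g2 : forall Y, eps (L Y) ∘ gamma Y = idm (L Y))
  (g3 : forall Y, fmap L (fmap R (eps (L Y))) ∘ gamma (R (L Y)) = gamma Y ∘ eps (L Y))
  (Y : EMCat L R eta eps) :
  exists (i : @Hom (EMCat L R eta eps) Y (R1 adj (L (carrier Y))))
         (p : @Hom (EMCat L R eta eps) (R1 adj (L (carrier Y))) Y), p ∘ i = idm Y.
Proof.
  destruct Y as [y a au aa]. simpl.
  set (phi := fmap L a ∘ gamma y).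
  assert (key : phi ∘ fmap L a = phi ∘ eps (L y)).
  { unfold phi. rewrite <- cA, <- (g1 _ _ a), cA, <- (fc L a (fmap R (fmap L a))).
    rewrite <- aa. rewrite (fc L), <- cA, g3, cA. reflexivity. }
  assert (Hi : fmap R phi ∘ eta y ∘ a =
               fmap R (eps (L y)) ∘ fmap R (fmap L (fmap R phi ∘ eta y))).
  { rewrite (fc L), (fc R (fmap L (fmap R phi))), cA, <- (fc R (eps (L y))), <- (eps_nat adj).
    rewrite (fc R phi), <- (cA (fmap R phi) (fmap R (eps (L y)))), <- (fc R (eps (L y))), (tri_L adj), fi, cr.
    rewrite <- cA, <- (eta_nat adj), cA, <- fc, key, fc, <- cA, (tri_R adj), cr. reflexivity. }
  unshelve eexists (exist _ (fmap R phi ∘ eta y) _).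
  { exact Hi. }
  unshelve eexists (exist _ a _).
  { simpl. exact aa. }
  apply EMHom_eq. simpl. unfold phi.
  rewrite (fc R (fmap L a)), !cA, <- aa, <- (cA a), <- fc, g2, fi, cr, au. reflexivity.
Qed.

Lemma part1 {A B : Category} {L : Functor B A} {R : Functor A B} {eta eps}
  (adj : is_adjunction L R eta eps) : separable L R eps -> fully_faithful (R1 adj).
Proof.
  intros [sigma [s1 s2]] a b. split.
  - intros f g Hfg. apply (f_equal (@proj1_sig _ _)) in Hfg. simpl in Hfg.
    rewrite <- (cr f), <- (cr g), <- (s2 a), !cA, !(eps_nat adj), Hfg. reflexivity.
  - intros [h Hh]. simpl in Hh. exists (eps b ∘ fmap L h ∘ sigma a).
    apply EMHom_eq. simpl.
    rewrite !(fc R), <- Hh, <- (cA h), <- (fc R (eps a)), s2, fi, cr. reflexivity.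
Qed.

Lemma unit_iso {A B : Category} {L : Functor B A} {R : Functor A B} {eta eps}
  (adj : is_adjunction L R eta eps) (L1 : Functor (EMCat L R eta eps) A) eta1 eps1
  (H1 : is_adjunction L1 (R1 adj) eta1 eps1) :
  relatively_projective (Fcomp R L) (fun Y => fmap R (eps (L Y))) L (fun Y => eps (L Y)) ->
  forall Y, exists u, isoinv (eta1 Y) u.
Proof.
  intros [gamma [g1 [g2 g3]]] Y. simpl in g1, g3.
  destruct (em_retract adj gamma g1 g2 g3 Y) as [i [p pi]].
  destruct (em_k adj L1 eta1 eps1 H1 (carrier Y)) as [k Hk].
  exact (retract_unit H1 _ _ i p pi _ (unit_G H1 _ k Hk)).
Qed.

Lemma sep_relproj {A B : Category} {L : Functor B A} {R : Functor A B} {eta eps}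
  (adj : is_adjunction L R eta eps) : separable L R eps ->
  relatively_projective (Fcomp R L) (fun Y => fmap R (eps (L Y))) L (fun Y => eps (L Y)).
Proof.
  intros [sigma [s1 s2]]. exists (fun Y => sigma (L Y)). simpl. split; [|split].
  - intros Y Y' f. apply s1.
  - intros Y. apply s2.
  - intros Y. apply s1.
Qed.

Theorem proposition1p16 (A B : Category) (L : Functor B A) (R : Functor A B)
    (eta : forall Y : B, @Hom B Y (R (L Y)))
    (eps : forall X : A, @Hom A (L (R X)) X)
    (adj : is_adjunction L R eta eps) :
  (* 1) *)
  (separable L R eps -> fully_faithful (R1 adj)) /\
  (* 2) *)
  (forall (L1 : Functor (EMCat L R eta eps) A)
          (eta1 : forall Y : EMCat L R eta eps, @Hom (EMCat L R eta eps) Y (R1 adj (L1 Y)))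
          (eps1 : forall X : A, @Hom A (L1 (R1 adj X)) X),
      is_adjunction L1 (R1 adj) eta1 eps1 ->
      relatively_projective (Fcomp R L) (fun Y => fmap R (eps (L Y)))
                            L (fun Y => eps (L Y)) ->
      fully_faithful L1) /\
  (* 3) *)
  (forall (L1 : Functor (EMCat L R eta eps) A)
          (eta1 : forall Y : EMCat L R eta eps, @Hom (EMCat L R eta eps) Y (R1 adj (L1 Y)))
          (eps1 : forall X : A, @Hom A (L1 (R1 adj X)) X),
      is_adjunction L1 (R1 adj) eta1 eps1 ->
      separable L R eps -> monadic adj).
Proof.
  split; [|split].
  - apply part1.
  - intros L1 eta1 eps1 H1 Hrp. apply (unitiso_ff H1). apply (unit_iso adj L1 eta1 eps1 H1 Hrp).
  - intros L1 eta1 eps1 H1 Hsep.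
    pose proof (unit_iso adj L1 eta1 eps1 H1 (sep_relproj adj Hsep)) as Hu.
    pose proof (ff_counit H1 (part1 adj Hsep)) as He.
    set (u := fun Y => proj1_sig (constructive_indefinite_description _ (Hu Y))).
    assert (Hu' : forall Y, isoinv (eta1 Y) (u Y)).
    { intro Y. unfold u. destruct (constructive_indefinite_description _ (Hu Y)). assumption. }
    set (e := fun X => proj1_sig (constructive_indefinite_description _ (He X))).
    assert (He' : forall X, isoinv (eps1 X) (e X)).
    { intro X. unfold e. destruct (constructive_indefinite_description _ (He X)). assumption. }
    exists L1, eps1, e, u, eta1. split; [|split; [|split]].
    + apply (eps_nat H1).
    + intro X. destruct (He' X). split; assumption.
    + apply (inv_nat H1 u Hu').
    + intro Y. destruct (Hu' Y). split; assumption.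
Qed.
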